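(* Let $q\equiv 3\pmod 4$ be a prime power. Let $\Psi:\mathcal{H}_2(\mathbb{F}_{q^2})\to\mathcal{H}_2(\mathbb{F}_{q^2})$ and $\Phi:\mathcal{HGL}_2(\mathbb{F}_{q^2})\to\mathcal{HGL}_2(\mathbb{F}_{q^2})$ be maps and set $\psi=\Omega^{-1}\circ\Psi\circ\Omega:\mathbb{F}_q^4\to\mathbb{F}_q^4$ and $\varphi=\omega^{-1}\circ\Phi\circ\omega:\mathbb{F}_q^4\setminus C_0\to\mathbb{F}_q^4\setminus C_0$. Then: (i) If $\Psi(A)=A+B$ for some fixed $B\in\mathcal{H}_2(\mathbb{F}_{q^2})$, then $\psi(\mathbf{r})=\mathbf{r}+\mathbf{r}_0$ for some $\mathbf{r}_0\in\mathbb{F}_q^4$. (ii) If $\Phi(A)=A^{-1}$, then $\varphi(\mathbf{r})=\frac{L\mathbf{r}}{(\mathbf{r},\mathbf{r})}$ for some Lorentz matrix $L$. (iii) If $\Psi(A)=A^\sigma$ for some field automorphism $\sigma$ of $\mathbb{F}_{q^2}$ (applied entry-wise), then $\psi(\mathbf{r})=L\mathbf{r}^\tau$ for some Lorentz matrix $L$ and some automorphism $\tau$ of $\mathbb{F}_q$ (applied coordinate-wise). (iv) If $\Psi(A)=PAP^\ast$ for some invertible $2\times2$ matrix $P$ such that $\det P\,\overline{\det P}$ is a square in $\mathbb{F}_q$, then $\psi(\mathbf{r})=\alpha L\mathbf{r}$ for some Lorentz matrix $L$ and nonzero $\alpha\in\mathbb{F}_q$. (v) If $\Psi(A)=PAP^\ast$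 for some invertible $P$ such that $\det P\,\overline{\det P}$ is not a square in $\mathbb{F}_q$, then $\psi(\mathbf{r})=\alpha K\mathbf{r}$ for some anti-Lorentz matrix $K$ and nonzero $\alpha\in\mathbb{F}_q$.
   Context: $\mathbb{F}_{q^2}$ is the field with $q^2$ elements, with involution $\bar x=x^q$ whose fixed field is $\mathbb{F}_q$; $X^\ast=\bar X^\top$; $\mathcal{H}_2(\mathbb{F}_{q^2})$ is the set of $2\times2$ hermitian ($A^\ast=A$) matrices and $\mathcal{HGL}_2(\mathbb{F}_{q^2})$ its invertible elements. Since $q\equiv3\pmod4$, $-1$ is not a square in $\mathbb{F}_q$; fix $\imath\in\mathbb{F}_{q^2}$ with $\imath^2=-1$. For $\mathbf{r}_k=(x_k,y_k,z_k,t_k)^\top\in\mathbb{F}_q^4$ put $(\mathbf{r}_1,\mathbf{r}_2)=-x_1x_2-y_1y_2-z_1z_2+t_1t_2$, and $C_0=\{\mathbf{r}:(\mathbf{r},\mathbf{r})=0\}$. A $4\times4$ matrix $L$ over $\mathbb{F}_q$ is Lorentz if $(L\mathbf{r}_1,L\mathbf{r}_2)=(\mathbf{r}_1,\mathbf{r}_2)$ for all $\mathbf{r}_1,\mathbf{r}_2$, and anti-Lorentz if $(L\mathbf{r}_1,L\mathbf{r}_2)=-(\mathbf{r}_1,\mathbf{r}_2)$ for all $\mathbf{r}_1,\mathbf{r}_2$. $\Omega:\mathbb{F}_q^4\to\mathcal{H}_2(\mathbb{F}_{q^2})$ is the bijection $\Omega((x,y,z,t)^\top)=\begin{bmatrix}t+x&y+\imath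 z\\ y-\imath z&t-x\end{bmatrix}$, which maps $\mathbb{F}_q^4\setminus C_0$ bijectively onto $\mathcal{HGL}_2(\mathbb{F}_{q^2})$; $\omega$ is this restriction. *)

(* Defs.v *)
From HB Require Import structures.
From mathcomp Require Import all_boot all_order all_algebra.
Set Implicit Arguments. Unset Strict Implicit. Unset Printing Implicit Defensive.
Import Order.TTheory GRing.Theory Num.Theory.
Local Open Scope ring_scope.

(* F plays F_q, K plays F_{q^2}; iota : F -> K is the embedding of F_q in F_{q^2}. *)

Section Defs.
Variables (F K : finFieldType) (iota : {rmorphism F -> K}) (q : nat) (im : K).

Definition conjq (x : K) : K := x ^+ q.

Definition adjq (A : 'M[K]_2) : 'M[K]_2 := (map_mx conjq A)^T.

Definition herm2 (A : 'M[K]_2) : bool := adjq A == A.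

Definition mx2 (a b c d : K) : 'M[K]_2 :=
  \matrix_(i < 2, j < 2)
    if i == 0 :> nat then (if j == 0 :> nat then a else b)
    else (if j == 0 :> nat then c else d).

Definition cx (r : 'cV[F]_4) : F := r (inord 0) 0.
Definition cy (r : 'cV[F]_4) : F := r (inord 1) 0.
Definition cz (r : 'cV[F]_4) : F := r (inord 2) 0.
Definition ct (r : 'cV[F]_4) : F := r (inord 3) 0.

Definition mink (r1 r2 : 'cV[F]_4) : F :=
  - cx r1 * cx r2 - cy r1 * cy r2 - cz r1 * cz r2 + ct r1 * ct r2.

Definition lorentz (L : 'M[F]_4) : Prop :=
  forall r1 r2 : 'cV[F]_4, mink (L *m r1) (L *m r2) = mink r1 r2.

Definition anti_lorentz (L : 'M[F]_4) : Prop :=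
  forall r1 r2 : 'cV[F]_4, mink (L *m r1) (L *m r2) = - mink r1 r2.

Definition Omega (r : 'cV[F]_4) : 'M[K]_2 :=
  mx2 (iota (ct r + cx r)) (iota (cy r) + im * iota (cz r))
      (iota (cy r) - im * iota (cz r)) (iota (ct r - cx r)).

(* the inverse map of the bijection Omega (default 0 outside its range) *)
Definition Omega_inv (M : 'M[K]_2) : 'cV[F]_4 :=
  odflt 0 [pick r : 'cV[F]_4 | Omega r == M].

(* psi = Omega^{-1} o Psi o Omega  (also used for varphi = omega^{-1} o Phi o omega) *)
Definition conjugated (Psi : 'M[K]_2 -> 'M[K]_2) (r : 'cV[F]_4) : 'cV[F]_4 :=
  Omega_inv (Psi (Omega r)).

End Defs.

(* Main.v *)
Require Import Defs.
From HB Require Import structures.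
From mathcomp Require Import all_boot all_order all_algebra all_field.
From mathcomp Require Import ring.
Set Implicit Arguments. Unset Strict Implicit. Unset Printing Implicit Defensive.
Import Order.TTheory GRing.Theory Num.Theory.
Local Open Scope ring_scope.

Section Mx.
Variable (R : nzRingType).

Definition col4 (a b c d : R) : 'cV[R]_4 := \col_(i < 4) nth 0 [:: a; b; c; d] i.

Lemma col4E0 a b c d : col4 a b c d (inord 0) 0 = a.
Proof. by rewrite mxE inordK. Qed.
Lemma col4E1 a b c d : col4 a b c d (inord 1) 0 = b.
Proof. by rewrite mxE inordK. Qed.
Lemma col4E2 a b c d : col4 a b c d (inord 2) 0 = c.
Proof. by rewrite mxE inordK. Qed.
Lemma col4E3 a b c d : col4 a b c d (inord 3) 0 = d.
Proof. by rewrite mxE inordK. Qed.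

Lemma vec4_eq (r s : 'cV[R]_4) :
  r (inord 0) 0 = s (inord 0) 0 -> r (inord 1) 0 = s (inord 1) 0 ->
  r (inord 2) 0 = s (inord 2) 0 -> r (inord 3) 0 = s (inord 3) 0 -> r = s.
Proof.
move=> h0 h1 h2 h3; apply/matrixP => i j; rewrite (ord1 j).
case: i => [[|[|[|[|?]]]] Hi] //.
- by have -> : Ordinal Hi = inord 0 by apply/val_inj; rewrite /= inordK.
- by have -> : Ordinal Hi = inord 1 by apply/val_inj; rewrite /= inordK.
- by have -> : Ordinal Hi = inord 2 by apply/val_inj; rewrite /= inordK.
- by have -> : Ordinal Hi = inord 3 by apply/val_inj; rewrite /= inordK.
Qed.

Lemma vec4_col4 (r : 'cV[R]_4) :
  r = col4 (r (inord 0) 0) (r (inord 1) 0) (r (inord 2) 0) (r (inord 3) 0).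
Proof. by apply: vec4_eq; rewrite ?col4E0 ?col4E1 ?col4E2 ?col4E3. Qed.

Definition m2 (a b c d : R) : 'M[R]_2 :=
  \matrix_(i < 2, j < 2)
    if i == 0 :> nat then (if j == 0 :> nat then a else b)
    else (if j == 0 :> nat then c else d).

Lemma m2_eq (A : 'M[R]_2) :
  A = m2 (A ord0 ord0) (A ord0 ord_max) (A ord_max ord0) (A ord_max ord_max).
Proof.
apply/matrixP => i j; rewrite mxE.
case: i => [[|[|?]] Hi] //; case: j => [[|[|?]] Hj] //=.
- by congr (A _ _); apply/val_inj.
- by congr (A _ _); apply/val_inj.
- by congr (A _ _); apply/val_inj.
- by congr (A _ _); apply/val_inj.
Qed.

Lemma m2_inj a b c d a' b' c' d' : m2 a b c d = m2 a' b' c' d' ->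
  [/\ a = a', b = b', c = c' & d = d'].
Proof.
move/matrixP => H.
have := H ord0 ord0; have := H ord0 ord_max; have := H ord_max ord0;
have := H ord_max ord_max; rewrite !mxE /=.
by move=> *; split.
Qed.

Lemma m2D a b c d a' b' c' d' :
  m2 a b c d + m2 a' b' c' d' = m2 (a + a') (b + b') (c + c') (d + d').
Proof. by apply/matrixP => i j; rewrite !mxE; case: ifP; case: ifP. Qed.

Lemma m2Z k a b c d : k *: m2 a b c d = m2 (k * a) (k * b) (k * c) (k * d).
Proof. by apply/matrixP => i j; rewrite !mxE; case: ifP; case: ifP. Qed.

Lemma m2M a b c d a' b' c' d' :
  m2 a b c d *m m2 a' b' c' d' =
  m2 (a * a' + b * c') (a * b' + b * d') (c * a' + d * c') (c * b' + d * d').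
Proof.
apply/matrixP => i j; rewrite !mxE !big_ord_recr big_ord0 /= !mxE add0r /=.
by case: ifP; case: ifP.
Qed.

Lemma m2T a b c d : (m2 a b c d)^T = m2 a c b d.
Proof. by apply/matrixP => i j; rewrite !mxE; case: ifP; case: ifP. Qed.


Lemma m2_1 : (1%:M : 'M[R]_2) = m2 1 0 0 1.
Proof.
apply/matrixP => i j; rewrite !mxE.
by case: i => [[|[|?]] Hi] //; case: j => [[|[|?]] Hj].
Qed.

End Mx.

Lemma m2_map (R S : nzRingType) (f : R -> S) (a b c d : R) :
  map_mx f (m2 a b c d) = m2 (f a) (f b) (f c) (f d).
Proof. by apply/matrixP => i j; rewrite !mxE; case: ifP; case: ifP. Qed.

Lemma m2_det (R : comNzRingType) (a b c d : R) : \det (m2 a b c d) = a * d - b * c.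
Proof.
rewrite (expand_det_row _ ord0) !big_ord_recr big_ord0 /= add0r.
rewrite /cofactor !det_mx11 !mxE /=.
by rewrite expr0 expr1 !mul1r mulN1r mulrN.
Qed.


Definition D4 (R : nzRingType) (a b c d : R) : 'M[R]_4 := diag_mx (col4 a b c d)^T.

Lemma D4E (R : nzRingType) (a b c d : R) (r : 'cV[R]_4) i :
  (D4 a b c d *m r) i 0 = col4 a b c d i 0 * r i 0.
Proof. by rewrite mul_diag_mx !mxE. Qed.

Lemma D4_cx (R : finFieldType) (a b c d : R) r : cx (D4 a b c d *m r) = a * cx r.
Proof. by rewrite /cx D4E col4E0. Qed.
Lemma D4_cy (R : finFieldType) (a b c d : R) r : cy (D4 a b c d *m r) = b * cy r.
Proof. by rewrite /cy D4E col4E1. Qed.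
Lemma D4_cz (R : finFieldType) (a b c d : R) r : cz (D4 a b c d *m r) = c * cz r.
Proof. by rewrite /cz D4E col4E2. Qed.
Lemma D4_ct (R : finFieldType) (a b c d : R) r : ct (D4 a b c d *m r) = d * ct r.
Proof. by rewrite /ct D4E col4E3. Qed.

Lemma D4_lorentz (R : finFieldType) (a b c d : R) :
  a * a = 1 -> b * b = 1 -> c * c = 1 -> d * d = 1 -> lorentz (D4 a b c d).
Proof.
move=> ha hb hc hd r1 r2; rewrite /mink !D4_cx !D4_cy !D4_cz !D4_ct.
ring: ha hb hc hd.
Qed.

Lemma invmx_eq (R : comUnitRingType) (A B : 'M[R]_2) :
  A \in unitmx -> B *m A = 1%:M -> invmx A = B.
Proof. by move=> uA h; rewrite -[invmx A]mul1mx -h -mulmxA mulmxV // mulmx1. Qed.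


Lemma sq_lemma (F : finFieldType) (n : F) : odd #|F| ->
  ~ (exists b, b ^+ 2 = n) -> ~ (exists b : F, b ^+ 2 = -1) ->
  exists b, b ^+ 2 = - n.
Proof.
move=> oddF nsq m1.
pose S := [set x ^+ 2 | x in [set: F]].
have step1 : (#|F| <= #|S| * 2)%N.
  rewrite -cardsT -sum1_card (partition_big_imset (fun x : F => x ^+ 2)) /= -sum_nat_const.
  apply: leq_sum => j /imsetP [x _ ->].
  rewrite (eq_bigl (mem [set i | i ^+ 2 == x ^+ 2])); last by move=> i; rewrite !inE.
  rewrite sum1_card.
  apply: leq_trans (_ : #|[set x; -x]| <= 2)%N; last by rewrite cards2; case: (_ != _).
  apply: subset_leq_card; apply/subsetP => i; rewrite !inE.
  rewrite -subr_eq0 subr_sqr mulf_eq0 subr_eq0 addr_eq0.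
  by [].
have n0 : n != 0 by apply/eqP => h; apply: nsq; exists 0; rewrite h expr0n.
pose nS := [set n * s | s in S].
have cnS : #|nS| = #|S| by rewrite card_imset //; apply: mulfI.
have cI : (#|nS :&: S| <= 1)%N.
  rewrite -(cards1 (0 : F)); apply: subset_leq_card; apply/subsetP => y.
  rewrite !inE => /andP [/imsetP [s /imsetP [u _ ->] ->] /imsetP [v _ e]].
  have [u0|u0] := eqVneq u 0; first by rewrite u0 expr0n mulr0.
  exfalso; apply: nsq; exists (v / u).
  by rewrite expr_div_n -e mulfK // expf_neq0.
have [/imsetP [s /imsetP [u _ ->] e]|nm1] := boolP (-1 \in nS).
  by exists (n * u); rewrite exprMn [n ^+ 2]expr2 -mulrA -e mulrN1.
have sub : nS :|: S \subset [set~ -1].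
  apply/subsetP => y; rewrite !inE => /orP [] hy; apply/eqP => ey.
    by move: nm1; rewrite -ey hy.
  by move: hy => /imsetP [u _ eu]; apply: m1; exists u; rewrite -eu ey.
have := subset_leq_card sub; rewrite cardsC1.
have := cardsUI nS S; rewrite cnS => hU hle.
have : (#|S| * 2 <= #|F|)%N.
  have h1 : (#|S| + #|S| <= #|nS :|: S| + 1)%N by rewrite -hU leq_add2l.
  move: oddF step1 hle h1; case: #|F| => // m.
  by rewrite /= muln2 -addnn; move=> _ _ h h1; rewrite -addn1 (leq_trans h1) // leq_add2r.
move=> h2; have eF : #|F| = (#|S| * 2)%N by apply/eqP; rewrite eqn_leq step1 h2.
by move: oddF; rewrite eF oddM andbF.
Qed.

Lemma lin4 (R : fieldType) (f : 'cV[R]_4 -> 'cV[R]_4) :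
  (forall a u v, f (a *: u + v) = a *: f u + f v) ->
  exists M : 'M[R]_4, forall r, M *m r = f r.
Proof.
move=> hf.
have f0 : f 0 = 0.
  by have := hf (-1) 0 0; rewrite scaler0 addr0 scaleN1r addNr.
exists (\matrix_(i, j) f (delta_mx j 0) i 0) => r.
have er : r = \sum_(j < 4) r j 0 *: delta_mx j 0.
  by rewrite [LHS]matrix_sum_delta; apply: eq_bigr => j _; rewrite big_ord1.
have fs : f r = \sum_(j < 4) r j 0 *: f (delta_mx j 0).
  rewrite {1}er; elim/big_rec2: _ => [|j y1 y2 _ <-]; [exact: f0 | exact: hf].
apply/matrixP => i k; rewrite (ord1 k) fs !mxE summxE; apply: eq_bigr => j _.
by rewrite !mxE mulrC.
Qed.

Lemma mink_polar (R : finFieldType) (u v : 'cV[R]_4) :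
  mink (u + v) (u + v) = mink u u + 2%:R * mink u v + mink v v.
Proof. rewrite /mink /cx /cy /cz /ct !mxE; ring. Qed.

Lemma minkZ (R : finFieldType) (k : R) (u v : 'cV[R]_4) :
  mink (k *: u) (k *: v) = k ^+ 2 * mink u v.
Proof. rewrite /mink /cx /cy /cz /ct !mxE; ring. Qed.

Section Arith.
Variables (F K : finFieldType) (iota : {rmorphism F -> K}) (q : nat) (im : K).
Hypotheses (hF : #|F| = q) (hK : #|K| = (q ^ 2)%N) (hq : (q %% 4 = 3)%N)
  (him : im ^+ 2 = -1).

Lemma q_odd : odd q.
Proof. by rewrite [q](divn_eq q 4) hq oddD oddM andbF. Qed.

Lemma q_gt1 : (1 < q)%N.
Proof. case: q hq => [|[|]] //. Qed.

Lemma pnat_q : exists p, [/\ prime p, p \in [pchar K] & [pchar K].-nat q].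
Proof.
case: (finPcharP K) => p pp pc.
have := card_pprimeChar pc; rewrite /= hK => e.
have : (q %| p ^ logn p (q ^ 2))%N by rewrite -e dvdn_mull.
case/(dvdn_pfactor _ _ pp) => m _ ->.
exists p; split => //.
by rewrite pnatX (eq_pnat _ (pcharf_eq pc)) pnat_id.
Qed.

Lemma two_neq0 : (2%:R : K) != 0.
Proof.
case: pnat_q => p [pp pc qn].
apply/negP => /eqP h2.
have c2 : (2 \in [pchar K])%N by rewrite inE h2 eqxx.
have p2 : p = 2%N by have := pcharf_eq pc 2; rewrite c2 => /esym /eqP.
move: qn; rewrite (eq_pnat _ (pcharf_eq pc)) p2 => /pnatP.
move=> H; have q1 := q_gt1.
have /H : prime (pdiv q) by rewrite pdiv_prime.
rewrite inE ltnW // pdiv_dvd => /(_ isT isT) /eqP e2.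
by have := pdiv_dvd q; rewrite e2 dvdn2 q_odd.
Qed.

Lemma conjqD (x y : K) : conjq q (x + y) = conjq q x + conjq q y.
Proof. by case: pnat_q => p [_ _ qn]; rewrite /conjq exprDn_pchar. Qed.

Lemma conjqN (x : K) : conjq q (- x) = - conjq q x.
Proof. by rewrite /conjq exprNn -signr_odd q_odd expr1 mulN1r. Qed.

Lemma conjqM (x y : K) : conjq q (x * y) = conjq q x * conjq q y.
Proof. by rewrite /conjq exprMn. Qed.

Lemma conjq1 : conjq q (1 : K) = 1.
Proof. by rewrite /conjq expr1n. Qed.

Lemma conjq0 : conjq q (0 : K) = 0.
Proof. by rewrite /conjq expr0n; case: q q_gt1. Qed.

Lemma conjqK (x : K) : conjq q (conjq q x) = x.
Proof. by rewrite /conjq -exprM mulnn -hK expf_card. Qed.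

Lemma conjq_iota a : conjq q (iota a) = iota a.
Proof. by rewrite /conjq -rmorphXn -hF expf_card. Qed.

Lemma conjq_im : conjq q im = - im.
Proof.
rewrite /conjq [q](divn_eq q 4) hq exprD mulnC exprM.
have -> : im ^+ 4 = 1 by rewrite (_ : 4 = 2 * 2)%N // exprM him sqrrN expr1n.
by rewrite expr1n mul1r exprS him mulrN1.
Qed.

Lemma conjq_fixed (x : K) : conjq q x = x -> exists a, iota a = x.
Proof.
move=> hx.
pose S := [set y : K | y ^+ q == y].
pose I := iota @: [set: F].
have sIS : I \subset S.
  by apply/subsetP => y /imsetP [a _ ->]; rewrite inE -[_ ^+ q]/(conjq q _) conjq_iota.
have cI : #|I| = q by rewrite card_imset ?cardsT ?hF //; apply: fmorph_inj.
have cS : (#|S| <= q)%N.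
  pose P := ('X^q - 'X : {poly K}).
  have sP : size P = q.+1.
    by rewrite /P size_addl ?size_polyXn // size_opp size_polyX ltnS q_gt1.
  have : (size (enum S) < size P)%N.
    apply: max_poly_roots; first by rewrite -size_poly_eq0 sP.
      by apply/allP => y; rewrite mem_enum inE /root /P !hornerE subr_eq0.
    exact: enum_uniq.
  by rewrite sP -cardE.
have eIS : I = S.
  apply/eqP; rewrite eqEcard sIS /= cI; exact: cS.
have : x \in S by rewrite inE -[_ ^+ q]/(conjq q _) hx.
by rewrite -eIS => /imsetP [a _ ->]; exists a.
Qed.


Definition cR : {rmorphism K -> K} :=
  HB.pack (conjq q) (GRing.isNmodMorphism.Build K K (conjq q) (conjq0, conjqD))
    (GRing.isMonoidMorphism.Build K K (conjq q) (conjq1, conjqM)).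

Lemma cRE x : cR x = conjq q x. Proof. by []. Qed.

Lemma im_neq0 : im != 0.
Proof.
apply/eqP => h; move: him; rewrite h expr0n /= => /eqP.
by rewrite eq_sym oppr_eq0 oner_eq0.
Qed.

Lemma iota_inj : injective iota.
Proof. exact: fmorph_inj. Qed.

Lemma cancel2 (u v : K) : 2%:R * u = 2%:R * v -> u = v.
Proof. exact: (mulfI two_neq0). Qed.

Lemma cancel2i (u v : K) : (2%:R * im) * u = (2%:R * im) * v -> u = v.
Proof. by apply: mulfI; rewrite mulf_neq0 ?two_neq0 ?im_neq0. Qed.

Lemma OmegaE r : Omega iota im r =
  m2 (iota (ct r + cx r)) (iota (cy r) + im * iota (cz r))
     (iota (cy r) - im * iota (cz r)) (iota (ct r - cx r)).
Proof. by []. Qed.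

Lemma coordD (r s : 'cV[F]_4) i : (r + s) i 0 = r i 0 + s i 0.
Proof. by rewrite mxE. Qed.
Lemma coordZ (a : F) (r : 'cV[F]_4) i : (a *: r) i 0 = a * r i 0.
Proof. by rewrite mxE. Qed.

Lemma OmegaD r s : Omega iota im (r + s) = Omega iota im r + Omega iota im s.
Proof.
rewrite !OmegaE m2D /cx /cy /cz /ct !coordD; congr m2;
  rewrite ?rmorphD ?rmorphB; ring.
Qed.

Lemma OmegaZ a r : Omega iota im (a *: r) = iota a *: Omega iota im r.
Proof.
rewrite !OmegaE m2Z /cx /cy /cz /ct !coordZ; congr m2;
  rewrite ?rmorphD ?rmorphB ?rmorphM; ring.
Qed.

Lemma Omega_herm r : herm2 q (Omega iota im r).
Proof.
rewrite /herm2 /adjq OmegaE m2_map m2T; apply/eqP.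
congr m2; rewrite -!cRE ?rmorphD ?rmorphB ?rmorphN ?rmorphM !cRE !conjq_iota ?conjq_im; ring.
Qed.

Lemma Omega_det r : \det (Omega iota im r) = iota (mink r r).
Proof.
rewrite OmegaE m2_det /mink ?rmorphD ?rmorphB ?rmorphN ?rmorphM.
have him' : im * im = -1 by rewrite -expr2.
have h : forall u : K, u = u - (im * im + 1) * (iota (cz r))^+2.
  by move=> u; rewrite him' addNr mul0r subr0.
rewrite ?rmorphN [LHS]h; ring.
Qed.

Lemma Omega_inj r s : Omega iota im r = Omega iota im s -> r = s.
Proof.
rewrite !OmegaE => /m2_inj [e1 e2 e3 e4].
rewrite ?rmorphD ?rmorphB ?rmorphN in e1 e4.
apply: vec4_eq; apply: iota_inj.
- apply: cancel2; transitivity ((iota (ct r) + iota (cx r)) - (iota (ct r) - iota (cx r))); first by ring.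
  by rewrite e1 e4 /cx; ring.
- apply: cancel2; transitivity ((iota (cy r) + im * iota (cz r)) + (iota (cy r) - im * iota (cz r))); first by ring.
  by rewrite e2 e3 /cy; ring.
- apply: cancel2i; transitivity ((iota (cy r) + im * iota (cz r)) - (iota (cy r) - im * iota (cz r))); first by ring.
  by rewrite e2 e3 /cz; ring.
- apply: cancel2; transitivity ((iota (ct r) + iota (cx r)) + (iota (ct r) - iota (cx r))); first by ring.
  by rewrite e1 e4 /ct; ring.
Qed.


Lemma Omega_surj A : herm2 q A -> exists r, Omega iota im r = A.
Proof.
move=> /eqP hA.
have e00 : adjq q A ord0 ord0 = A ord0 ord0 by rewrite hA.
have e11 : adjq q A ord_max ord_max = A ord_max ord_max by rewrite hA.
have e10 : adjq q A ord_max ord0 = A ord_max ord0 by rewrite hA.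
rewrite /adjq !mxE /= in e00 e11 e10.
set a := A ord0 ord0 in e00; set d := A ord_max ord_max in e11.
set b := A ord0 ord_max in e10.
have c2 : conjq q (2%:R : K) = 2%:R by rewrite -cRE rmorph_nat.
have [t ht] : exists t, iota t = (a + d) / 2%:R.
  by apply: conjq_fixed; rewrite -!cRE rmorphM rmorphD fmorphV !cRE c2 e00 e11.
have [x hx] : exists x, iota x = (a - d) / 2%:R.
  by apply: conjq_fixed; rewrite -!cRE rmorphM rmorphB fmorphV !cRE c2 e00 e11.
have [y hy] : exists y, iota y = (b + conjq q b) / 2%:R.
  by apply: conjq_fixed; rewrite -!cRE rmorphM rmorphD fmorphV !cRE c2 conjqK addrC.
have [z hz] : exists z, iota z = (b - conjq q b) / (2%:R * im).
  apply: conjq_fixed; rewrite -!cRE rmorphM rmorphB fmorphV rmorphM !cRE c2 conjqK conjq_im.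
  by rewrite mulrN invrN mulrN -mulNr opprB.
exists (col4 x y z t); rewrite OmegaE /cx /cy /cz /ct col4E0 col4E1 col4E2 col4E3.
rewrite [RHS](m2_eq A) -/a -/b -/d -e10 ?rmorphD ?rmorphB ?rmorphN ht hx hy hz.
by congr m2; field; rewrite ?two_neq0 ?im_neq0.
Qed.

Lemma Omega_invK r : Omega_inv iota im (Omega iota im r) = r.
Proof.
rewrite /Omega_inv; case: pickP => [s /eqP /Omega_inj -> //|].
by move/(_ r); rewrite eqxx.
Qed.

Lemma OmegaK A : herm2 q A -> Omega iota im (Omega_inv iota im A) = A.
Proof. by case/Omega_surj => r <-; rewrite Omega_invK. Qed.


Lemma part_i B : herm2 q B -> exists r0 : 'cV[F]_4,
  forall r, conjugated iota im (fun A => A + B) r = r + r0.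
Proof.
case/Omega_surj => r0 <-; exists r0 => r.
by rewrite /conjugated -OmegaD Omega_invK.
Qed.


Lemma part_ii : exists L : 'M[F]_4, lorentz L /\
  forall r, mink r r != 0 ->
    conjugated iota im (fun A => invmx A) r = (mink r r)^-1 *: (L *m r).
Proof.
exists (D4 (-1) (-1) (-1) 1); split.
  by apply: D4_lorentz; rewrite ?mulN1r ?opprK ?mulr1.
move=> r mr; rewrite /conjugated.
have uA : Omega iota im r \in unitmx.
  by rewrite unitmxE unitfE Omega_det fmorph_eq0.
set s := _ *: (_ *m r).
rewrite (invmx_eq (B := Omega iota im s) uA) ?Omega_invK //.
rewrite /s OmegaZ OmegaE !D4_cx !D4_cy !D4_cz !D4_ct -scalemxAl.
rewrite [Omega _ _ r]OmegaE m2M m2_1 m2Z.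
have hm : iota (mink r r) != 0 by rewrite fmorph_eq0.
move: hm; rewrite /mink ?rmorphD ?rmorphB ?rmorphN ?rmorphM ?rmorphN ?fmorphV ?rmorph1 => hm.
congr m2; rewrite ?fmorphV ?rmorphD ?rmorphB ?rmorphN ?rmorphM ?rmorphN ?rmorph1;
  by field: him.
Qed.

Section P3.
Variable sigma : {rmorphism K -> K}.

Lemma sigma_conj x : sigma (conjq q x) = conjq q (sigma x).
Proof. by rewrite /conjq rmorphXn. Qed.

Lemma tau_ex a : exists b, iota b == sigma (iota a).
Proof.
have [b hb] : exists b, iota b = sigma (iota a).
  by apply: conjq_fixed; rewrite -sigma_conj conjq_iota.
by exists b; rewrite hb.
Qed.

Definition tau (a : F) : F := odflt 0 [pick b | iota b == sigma (iota a)].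

Lemma tauE a : iota (tau a) = sigma (iota a).
Proof.
rewrite /tau; case: pickP => [b /eqP //|].
by case: (tau_ex a) => b hb /(_ b); rewrite hb.
Qed.

Lemma tau0 : tau 0 = 0.
Proof. by apply: iota_inj; rewrite tauE !rmorph0. Qed.
Lemma tauD : {morph tau : x y / x + y}.
Proof. by move=> x y; apply: iota_inj; rewrite tauE !rmorphD -!tauE. Qed.
Lemma tau1 : tau 1 = 1.
Proof. by apply: iota_inj; rewrite tauE !rmorph1. Qed.
Lemma tauM : {morph tau : x y / x * y}.
Proof. by move=> x y; apply: iota_inj; rewrite tauE !rmorphM -!tauE. Qed.

Definition tauR : {rmorphism F -> F} :=
  HB.pack tau (GRing.isNmodMorphism.Build F F tau (tau0, tauD))
    (GRing.isMonoidMorphism.Build F F tau (tau1, tauM)).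

Lemma tau_bij : bijective tauR.
Proof.
apply: injF_bij => x y /(congr1 iota); rewrite /= !tauE => /fmorph_inj.
exact: iota_inj.
Qed.

Lemma sigma_im : exists e : F, e * e = 1 /\ sigma im = iota e * im.
Proof.
have h : (sigma im - im) * (sigma im + im) = 0.
  rewrite mulrDr !mulrBl -!expr2 -rmorphXn him rmorphN rmorph1; ring.
move/eqP: h; rewrite mulf_eq0 => /orP [] /eqP h.
  by exists 1; rewrite mulr1 rmorph1 mul1r; split => //; apply/eqP; rewrite -subr_eq0 h.
exists (-1); rewrite mulrNN mulr1 rmorphN rmorph1 mulN1r; split => //.
by apply/eqP; rewrite -addr_eq0 h.
Qed.

Lemma part_iii : exists L : 'M[F]_4, exists tau : {rmorphism F -> F},
  lorentz L /\ bijective tau /\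
  forall r, conjugated iota im (fun A => map_mx sigma A) r = L *m map_mx tau r.
Proof.
have [e [he hs]] := sigma_im.
exists (D4 1 1 e 1), tauR; split; first by apply: D4_lorentz; rewrite ?mulr1.
split; first exact: tau_bij.
move=> r; rewrite /conjugated.
have -> : map_mx sigma (Omega iota im r) = Omega iota im (D4 1 1 e 1 *m map_mx tauR r).
  rewrite !OmegaE !D4_cx !D4_cy !D4_cz !D4_ct m2_map /cx /cy /cz /ct !mxE /=.
  rewrite ?rmorphD ?rmorphB ?rmorphN ?rmorphM ?rmorphN hs -!tauE.
  by congr m2; ring.
by rewrite Omega_invK.
Qed.

End P3.

Lemma adjqE (A : 'M[K]_2) : adjq q A = (map_mx cR A)^T.
Proof. by []. Qed.

Lemma adjq_mul (A B : 'M[K]_2) : adjq q (A *m B) = adjq q B *m adjq q A.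
Proof. by rewrite !adjqE map_mxM trmx_mul. Qed.

Lemma adjqK (A : 'M[K]_2) : adjq q (adjq q A) = A.
Proof. by apply/matrixP => i j; rewrite !mxE conjqK. Qed.

Lemma two_neq0F : (2%:R : F) != 0.
Proof. by rewrite -(fmorph_eq0 iota) rmorph_nat two_neq0. Qed.

Section P4.
Variable P : 'M[K]_2.
Hypothesis uP : P \in unitmx.

Definition gP r := Omega_inv iota im (P *m Omega iota im r *m adjq q P).

Lemma gPE r : Omega iota im (gP r) = P *m Omega iota im r *m adjq q P.
Proof.
apply: OmegaK; rewrite /herm2 !adjq_mul adjqK (eqP (Omega_herm r)) mulmxA.
by [].
Qed.

Lemma gP_lin a u v : gP (a *: u + v) = a *: gP u + gP v.
Proof.
apply: Omega_inj; rewrite OmegaD OmegaZ !gPE OmegaD OmegaZ.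
by rewrite mulmxDr mulmxDl -scalemxAr -scalemxAl.
Qed.

Definition NP := \det P * conjq q (\det P).

Lemma NP_fixed : exists n, iota n = NP.
Proof. by apply: conjq_fixed; rewrite /NP conjqM conjqK mulrC. Qed.

Lemma NP_neq0 : NP != 0.
Proof.
rewrite /NP mulf_neq0 //; first by rewrite -unitfE -unitmxE.
by rewrite /conjq expf_neq0 // -unitfE -unitmxE.
Qed.

Lemma gP_det r : iota (mink (gP r) (gP r)) = NP * iota (mink r r).
Proof.
rewrite -!Omega_det gPE !det_mulmx adjqE det_tr det_map_mx /NP cRE; ring.
Qed.

Lemma gP_mink n : iota n = NP -> forall u v, mink (gP u) (gP v) = n * mink u v.
Proof.
move=> hn.
have hd : forall r, mink (gP r) (gP r) = n * mink r r.
  by move=> r; apply: iota_inj; rewrite rmorphM hn gP_det.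
move=> u v; apply: (mulfI two_neq0F).
have gPD : gP (u + v) = gP u + gP v.
  have := gP_lin 1 u v; rewrite !scale1r. done.
have e := hd (u + v); rewrite gPD !mink_polar !hd in e.
apply: (addrI (n * mink u u)); apply: (addIr (n * mink v v)); rewrite e; ring.
Qed.

End P4.

Lemma m1F : ~ exists b : F, b ^+ 2 = -1.
Proof.
case=> b hb.
have hb' : iota b ^+ 2 = -1 by rewrite -rmorphXn hb rmorphN rmorph1.
have h : (iota b - im) * (iota b + im) = 0 by ring: hb' him.
have c := conjq_iota b.
have ci := conjq_im.
have i0 : 2%:R * im != 0 by rewrite mulf_neq0 ?two_neq0 ?im_neq0.
move/eqP: h; rewrite mulf_eq0 => /orP [] /eqP h.
  have e : iota b = im by apply/eqP; rewrite -subr_eq0 h.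
  by move: ci; rewrite -e c e => /eqP; rewrite -subr_eq0 opprK -mulr2n -mulr_natl (negbTE i0).
have e : iota b = - im by apply/eqP; rewrite -addr_eq0 h.
move: c; rewrite e conjqN ci opprK => /eqP; rewrite -subr_eq0 opprK -mulr2n -mulr_natl.
by rewrite (negbTE i0).
Qed.

Lemma part_iv P : P \in unitmx ->
  (exists a : F, iota a ^+ 2 = \det P * conjq q (\det P)) ->
  exists L : 'M[F]_4, exists alpha : F, lorentz L /\ alpha != 0 /\
    forall r, conjugated iota im (fun A => P *m A *m adjq q P) r = alpha *: (L *m r).
Proof.
move=> uP [a ha].
have hn : iota (a ^+ 2) = NP P by rewrite rmorphXn ha.
have a0 : a != 0.
  by apply: contraNneq (NP_neq0 uP) => a0; rewrite -hn a0 expr0n rmorph0.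
have [M hM] := lin4 (@gP_lin P).
exists (a^-1 *: M), a; split; [|split => //].
  move=> u v; rewrite -!scalemxAl !hM minkZ (gP_mink hn) exprVn mulrA mulVf ?mul1r //.
  by rewrite expf_neq0.
move=> r; rewrite -scalemxAl hM scalerA mulfV // scale1r.
by [].
Qed.

Lemma part_v P : P \in unitmx ->
  ~ (exists a : F, iota a ^+ 2 = \det P * conjq q (\det P)) ->
  exists L : 'M[F]_4, exists alpha : F, anti_lorentz L /\ alpha != 0 /\
    forall r, conjugated iota im (fun A => P *m A *m adjq q P) r = alpha *: (L *m r).
Proof.
move=> uP nsq.
have [n hn] := NP_fixed P.
have n0 : n != 0 by rewrite -(fmorph_eq0 iota) hn NP_neq0.
have nsqn : ~ exists b, b ^+ 2 = n.
  by case=> b hb; apply: nsq; exists b; rewrite -rmorphXn hb hn.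
have [al hal] := sq_lemma (n := n) (ltac:(by rewrite hF q_odd)) nsqn m1F.
have al0 : al != 0.
  by apply: contra n0 => /eqP a0; move: hal; rewrite a0 expr0n => /eqP; rewrite eq_sym oppr_eq0.
have [M hM] := lin4 (@gP_lin P).
exists (al^-1 *: M), al; split; [|split => //].
  move=> u v; rewrite -!scalemxAl !hM minkZ (gP_mink hn) exprVn hal mulrA invrN mulNr.
  by rewrite mulVf ?mulN1r.
move=> r; rewrite -scalemxAl hM scalerA mulfV // scale1r.
by [].
Qed.

End Arith.

Theorem lemma4p8 (F K : finFieldType) (iota : {rmorphism F -> K}) (q : nat)
  (im : K)
  (hF : #|F| = q) (hK : #|K| = (q ^ 2)%N) (hq : (q %% 4 = 3)%N)
  (him : im ^+ 2 = -1) :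
  let psi := conjugated iota im in
  (* (i) translation *)
  (forall B : 'M[K]_2, herm2 q B ->
     exists r0 : 'cV[F]_4,
       forall r : 'cV[F]_4, psi (fun A => A + B) r = r + r0) /\
  (* (ii) inversion on HGL_2 *)
  (exists L : 'M[F]_4, lorentz L /\
     forall r : 'cV[F]_4, mink r r != 0 ->
       psi (fun A => invmx A) r = (mink r r)^-1 *: (L *m r)) /\
  (* (iii) entrywise field automorphism *)
  (forall sigma : {rmorphism K -> K}, bijective sigma ->
     exists L : 'M[F]_4, exists tau : {rmorphism F -> F},
       lorentz L /\ bijective tau /\
       forall r : 'cV[F]_4, psi (fun A => map_mx sigma A) r = L *m map_mx tau r) /\
  (* (iv) congruence, det P * conj(det P) a square in F_q *)
  (forall P : 'M[K]_2, P \in unitmx ->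
     (exists a : F, iota a ^+ 2 = \det P * conjq q (\det P)) ->
     exists L : 'M[F]_4, exists alpha : F,
       lorentz L /\ alpha != 0 /\
       forall r : 'cV[F]_4, psi (fun A => P *m A *m adjq q P) r = alpha *: (L *m r)) /\
  (* (v) congruence, det P * conj(det P) not a square in F_q *)
  (forall P : 'M[K]_2, P \in unitmx ->
     ~ (exists a : F, iota a ^+ 2 = \det P * conjq q (\det P)) ->
     exists L : 'M[F]_4, exists alpha : F,
       anti_lorentz L /\ alpha != 0 /\
       forall r : 'cV[F]_4, psi (fun A => P *m A *m adjq q P) r = alpha *: (L *m r)).
Proof.
move=> psi; rewrite {}/psi; split; first exact: (part_i iota hF hK hq him).
split; first exact: (part_ii iota hK hq him).
split; first by move=> sigma _; exact: (part_iii iota hF hK hq him).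
split.
  by move=> P uP h; have H := part_iv hF hK hq him uP h; exact H.
by move=> P uP h; have H := part_v hF hK hq him uP h; exact H.
Qed.
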